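(* Let $n\geq1$ and $1\leq i<j\leq n$. In $M_n$, the left-lcm of $\rho_i$ and $\rho_j$ exists and equals $(\rho_1\rho_n)^{n-j+1}\rho_i=\rho_{n-j+i+1}(\rho_1\rho_n)^{n-j}\rho_j$.
   Context: $M_n$ denotes the monoid with generators $\rho_1,\dots,\rho_n$ and relations $\rho_1\rho_n\rho_i=\rho_{i+1}\rho_n$ for $1\leq i\leq n-1$. A left-lcm of $a,b$ is a common left-multiple of $a$ and $b$ (an element $xa=yb$) that right-divides every common left-multiple of $a$ and $b$. *)

(* Defs.v *)
From Stdlib Require Import Relation_Operators.
From mathcomp Require Import all_boot.
Set Implicit Arguments. Unset Strict Implicit. Unset Printing Implicit Defensive.

(* Words over the generators rho_1, ..., rho_n of M_n: the letter k : nat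
   stands for rho_k; a word is valid iff all its letters lie in [1, n]. *)
Definition word := seq nat.
Definition valid (n : nat) (w : word) : bool := all (fun k => (0 < k <= n)%N) w.

Definition Mstep (n : nat) (u v : word) : Prop :=
  exists (p s : word) (i : nat),
    [/\ (1 <= i)%N, (i <= n - 1)%N,
        u = p ++ [:: 1; n; i] ++ s & v = p ++ [:: i.+1; n] ++ s].

(* The congruence defining M_n: two valid words represent the same element
   of M_n iff they are related by this equivalence closure. *)
Definition Meq (n : nat) : word -> word -> Prop := clos_refl_sym_trans word (Mstep n).

Definition is_left_lcm (n : nat) (a b m : word) : Prop :=
  (exists x y : word, [/\ valid n x, valid n y, Meq n m (x ++ a) & Meq n m (y ++ b)]) /\
  (forall c x' y' : word, valid n c -> valid n x' -> valid n y' ->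
     Meq n c (x' ++ a) -> Meq n c (y' ++ b) ->
     exists z : word, valid n z /\ Meq n c (z ++ m)).

Definition r1n_pow (n k : nat) : word := flatten (nseq k [:: 1; n]).

(* Main.v *)
Require Import Defs.
From mathcomp Require Import all_boot.
From Stdlib Require Import Relation_Operators.
From mathcomp Require Import zify.
Set Implicit Arguments. Unset Strict Implicit. Unset Printing Implicit Defensive.

Section M.
Variable n : nat.
Hypothesis n2 : 1 < n.

Lemma Mstep_cat x y u v : Mstep n u v -> Mstep n (x ++ u ++ y) (x ++ v ++ y).
Proof.
case=> p [s] [i] [h1 h2 -> ->]; exists (x ++ p), (s ++ y), i; split => //;
by rewrite -!catA.
Qed.

Lemma Meq_ctx x y u v : Meq n u v -> Meq n (x ++ u ++ y) (x ++ v ++ y).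
Proof.
elim=> [a b H|a|a b _ IH|a b c _ IH1 _ IH2].
- by apply: rst_step; apply: Mstep_cat.
- exact: rst_refl.
- exact: rst_sym.
- exact: rst_trans IH2.
Qed.

Lemma Meq_catl x u v : Meq n u v -> Meq n (x ++ u) (x ++ v).
Proof. by move=> H; have := Meq_ctx x [::] H; rewrite !cats0. Qed.
Lemma Meq_catr y u v : Meq n u v -> Meq n (u ++ y) (v ++ y).
Proof. by move=> H; have := Meq_ctx [::] y H. Qed.
Lemma Meq_cat u v u' v' : Meq n u v -> Meq n u' v' -> Meq n (u ++ u') (v ++ v').
Proof. move=> H H'; apply: rst_trans (Meq_catr _ H) (Meq_catl _ H'). Qed.
Lemma Meq_refl u : Meq n u u. Proof. exact: rst_refl. Qed.
Lemma Meq_sym u v : Meq n u v -> Meq n v u. Proof. exact: rst_sym. Qed.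
Lemma Meq_trans u v w : Meq n u v -> Meq n v w -> Meq n u w. Proof. exact: rst_trans. Qed.

Lemma Mrel i : 0 < i -> i <= n - 1 -> Meq n [:: 1; n; i] [:: i.+1; n].
Proof. move=> h1 h2; apply: rst_step; exists [::], [::], i; by split. Qed.

Lemma nseqD a b (x : nat) : nseq (a + b) x = nseq a x ++ nseq b x.
Proof. by elim: a => //= a ->. Qed.

Lemma Rrel k m : 0 < k <= n -> 0 < m < n ->
  Meq n ([::k] ++ nseq k n ++ [::m])
        (if k + m <= n then [::k+m] ++ nseq k n else [::k+m-n] ++ nseq k.+1 n).
Proof.
move=> hk0 hm; elim: k hk0 => // k IH hk0; move/andP: hm => [m0 mn]; have hk : k < n by lia.
case: (posnP k) => [->|k0].
  rewrite /= add1n (_ : m.+1 <= n) //; apply: Mrel; lia.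
have IH' := IH ltac:(lia).
have -> : [:: k.+1] ++ nseq k.+1 n ++ [:: m] = [:: k.+1; n] ++ (nseq k n ++ [:: m]) by [].
apply: Meq_trans (Meq_catr _ (Meq_sym (Mrel (i:=k) _ _))) _; try lia.
have -> : [:: 1; n; k] ++ nseq k n ++ [:: m] = [::1; n] ++ ([::k] ++ nseq k n ++ [:: m]) by [].
apply: Meq_trans (Meq_catl _ IH') _.
case: (ltngtP (k + m) n) => h.
-   have -> : [:: 1; n] ++ [:: k + m] ++ nseq k n = [:: 1; n; k+m] ++ nseq k n by [].
  have -> : [:: k.+1 + m] ++ nseq k.+1 n = [:: (k+m).+1; n] ++ nseq k n by rewrite addSn.
  apply: Meq_catr; apply: Mrel; lia.
-   have -> : [:: 1; n] ++ [:: k + m - n] ++ nseq k.+1 n = [:: 1; n; k+m-n] ++ nseq k.+1 n by [].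
  have -> : [:: k.+1 + m - n] ++ nseq k.+2 n = [:: (k+m-n).+1; n] ++ nseq k.+1 n.
    by rewrite (_ : k.+1 + m - n = (k+m-n).+1) //; lia.
  apply: Meq_catr; apply: Mrel; lia.
-   have -> : k.+1 + m - n = 1 by lia.
  rewrite h; exact: Meq_refl.
Qed.


Lemma Dcomm q m : 0 < m < n ->
  Meq n (nseq (n.+1 * q) n ++ [::m]) ([::m] ++ nseq (n.+1 * q) n).
Proof.
move=> hm; elim: q => [|q IH]; first by rewrite muln0; exact: Meq_refl.
rewrite mulnS nseqD -catA.
apply: Meq_trans (Meq_catl _ IH) _.
rewrite !catA; apply: Meq_catr.
have := Rrel (k:=n) (m:=m) ltac:(lia) hm.
rewrite (_ : n + m <= n = false); last lia.
by rewrite (_ : n + m - n = m); last lia.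
Qed.

Lemma r1n_pow_eq k : 0 < k <= n -> Meq n (r1n_pow n k) ([::k] ++ nseq k n).
Proof.
elim: k => // k IH hk.
case: (posnP k) => [->|k0]; first exact: Meq_refl.
rewrite /r1n_pow /= -/(r1n_pow n k).
have -> : [:: 1, n & r1n_pow n k] = [::1; n] ++ r1n_pow n k by [].
apply: Meq_trans (Meq_catl _ (IH ltac:(lia))) _.
have -> : [:: 1; n] ++ [:: k] ++ nseq k n = [::1;n;k] ++ nseq k n by [].
have -> : [:: k.+1, n & nseq k n] = [::k.+1; n] ++ nseq k n by [].
apply: Meq_catr; apply: Mrel; lia.
Qed.

Definition st := (seq (nat * nat) * nat)%type.

Definition addb (S : st) : st :=
  match S with (B, q) =>
  match B with
  | (k, r) :: rest => if r == n then ((k, 0) :: rest, q.+1) else ((k, r.+1) :: rest, q)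
  | [::] => S end end.

Definition stepr (m : nat) (S : st) : st :=
  match S with (B, q) =>
  match B with
  | (k, r) :: rest =>
      if (k != 0) && (r == k) then
        if k + m < n then ((k + m, k) :: rest, q)
        else if n < k + m then ((k + m - n, k.+1) :: rest, q)
        else iter k.+1 addb (rest, q)
      else ((m, 0) :: B, q)
  | [::] => S end end.

Definition step (S : st) (a : nat) : st :=
  if a == n then addb S else if 0 < a < n then stepr a S else S.

Definition init : st := ([:: (0, 0)], 0).
Definition mdl (w : word) : st := foldl step init w.

Fixpoint Invt (B : seq (nat * nat)) : bool :=
  match B with
  | [::] => false
  | (k, r) :: rest =>
     if rest is [::] then (k == 0) && (r <= n)
     else [&& 0 < k < n, r <= n, r != k & Invt rest]
  end.

Definition Inv (S : st) : bool :=
  match S.1 with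
  | [::] => false
  | (k, r) :: rest =>
     if rest is [::] then (k == 0) && (r <= n)
     else [&& 0 < k < n, r <= n & Invt rest]
  end.

Lemma Invt_Inv B q : Invt B -> Inv (B, q).
Proof.
case: B => // [[k r] [|b rest]] //=; rewrite /Inv /=; by case/and4P => -> -> _ ->.
Qed.

Lemma Inv_addb S : Inv S -> Inv (addb S).
Proof.
case: S => [[|[k r] rest] q] //=; rewrite /Inv /=.
case: rest => [|b rest] /=.
  by case/andP=> /eqP -> hr; case: eqP => //= hrn; lia.
case/and3P => hk hr hb; case: eqP => //= hrn; rewrite hk hb /= ?andbT; lia.
Qed.

Lemma Inv_iter t S : Inv S -> Inv (iter t addb S).
Proof. by elim: t => //= t IH /IH /Inv_addb. Qed.

Lemma Inv_step S a : Inv S -> 0 < a <= n -> Inv (step S a).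
Proof.
move=> hS ha; rewrite /step; case: eqP => [_|an]; first exact: Inv_addb.
rewrite (_ : 0 < a < n); last by apply/andP; lia.
move: hS; case: S => [[|[k r] rest] q] //=.
case: rest => [|[k' r'] rest] /=.
  rewrite /Inv /= => /andP[/eqP -> hr] /=; apply/andP; split => //; lia.
rewrite /Inv /= => /and3P[hk hr ht].
case: ifP => [/andP[/eqP k0 /eqP rk]|hred].
  case: ifP => h1 /=; first by rewrite /Inv /= ht andbT; apply/andP; split; lia.
  case: ifP => h2 /=; first by rewrite /Inv /= ht andbT; apply/andP; split; lia.
  apply: (Inv_iter k.+1); exact: (Invt_Inv (B := (k', r') :: rest)).
rewrite /Inv /= hk hr ht /= !andbT; apply/andP; split; first (apply/andP; split); try lia.
Qed.


Lemma iter_addb t k r rest q : r <= n -> t <= n.+1 ->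
  iter t addb ((k, r) :: rest, q) =
  if r + t <= n then ((k, r + t) :: rest, q) else ((k, r + t - n.+1) :: rest, q.+1).
Proof.
move=> hr; elim: t => [|t IH] ht; first by rewrite addn0 hr.
rewrite iterS IH; last lia.
case: (leqP (r + t) n) => h1 /=.
  case: eqP => h2.
    have -> : r + t.+1 <= n = false by lia.
    by have -> : r + t.+1 - n.+1 = 0 by lia.
  have -> : r + t.+1 <= n by lia.
  by rewrite addnS.
case: eqP => h2; first lia.
have -> : r + t.+1 <= n = false by lia.
by have -> : r + t.+1 - n.+1 = (r + t - n.+1).+1 by lia.
Qed.

Ltac splitif := repeat (case: ifP => /=; [move=> ? | move/negbT => ?]).

Lemma step3 S i : Inv S -> 0 < i < n ->
  step (step (step S 1) n) i = step (step S i.+1) n.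
Proof.
move=> hS hi.
have e1 : (1 == n) = false by apply/eqP; lia.
have e2 : (i == n) = false by apply/eqP; lia.
have e3 : (0 < 1 < n) by apply/andP; lia.
rewrite /step e1 e2 e3 eqxx hi.
move: hS; case: S => [[|[k r] rest] q] //; rewrite /Inv /= => hS.
have hk : k < n by case: rest hS => [|b rest] /=; [case/andP => /eqP -> | case/and3P => /andP[]]; lia.
have hr : r <= n by case: rest hS => [|b rest] /=; [case/andP | case/and3P]; lia.
case: ifP => hred.
  move/andP: hred => [/eqP k0 /eqP rk]; subst r.
  move: hS; case: rest => [|[k' r'] rest'] /=; first by case/andP => /eqP.
  move=> /and3P[_ _ ht].
  have hr' : r' <= n by case: rest' ht => [|b rest'] /=; [case/andP | case/and4P]; lia.
  have hnr : ~~ ((k' != 0) && (r' == k')).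
    by case: rest' ht => [|b rest'] /=; [case/andP => /eqP -> | case/and4P => _ _ /negbTE -> _; rewrite andbF].
  do 3 (splitif; rewrite ?iter_addb //=; try lia).
  all: try (exfalso; lia); try (by first [congr ((_, _) :: (_, _) :: _, _) | congr ((_, _) :: _, _)]; lia).
move/negbT: hred => hred.
do 3 (splitif; rewrite ?iter_addb //=; try lia).
all: try (exfalso; lia); try (by first [congr ((_, _) :: (_, _) :: _, _) | congr ((_, _) :: _, _)]; lia).
Qed.


Lemma Mstep_valid u v : Mstep n u v -> valid n u = valid n v.
Proof.
case=> p [s] [i] [h1 h2 -> ->]; rewrite /valid !all_cat /=.
have -> : (i < n) by lia.
by rewrite leqnn (_ : 0 < n) //; lia.
Qed.

Lemma Meq_valid u v : Meq n u v -> valid n u = valid n v.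
Proof.
elim=> [a b H|a|a b _ IH|a b c _ IH1 _ IH2] //; [exact: Mstep_valid | by rewrite IH1].
Qed.

Lemma Inv_fold S w : Inv S -> valid n w -> Inv (foldl step S w).
Proof.
elim: w S => //= a w IH S hS /andP[ha hw]; apply: IH => //; exact: Inv_step.
Qed.

Lemma Inv_init : Inv init. Proof. by []. Qed.

Lemma Inv_mdl w : valid n w -> Inv (mdl w).
Proof. exact: Inv_fold. Qed.

Lemma mdl_cat u v : mdl (u ++ v) = foldl step (mdl u) v.
Proof. by rewrite /mdl foldl_cat. Qed.

Lemma mdl_Mstep u v : Mstep n u v -> valid n u -> mdl u = mdl v.
Proof.
case=> p [s] [i] [h1 h2 -> ->]; rewrite /valid all_cat => /andP[hp _].
rewrite !mdl_cat /=; congr foldl.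
have hi : 0 < i < n by apply/andP; lia.
have := step3 (Inv_mdl hp) hi; rewrite /step.
by [].
Qed.

Lemma mdl_Meq u v : Meq n u v -> valid n u -> mdl u = mdl v.
Proof.
elim=> [a b H|a|a b H IH|a b c H1 IH1 H2 IH2] hv //.
- exact: mdl_Mstep.
- by rewrite IH // (Meq_valid H).
- by rewrite IH1 // IH2 // -(Meq_valid H1).
Qed.


Definition hdw (k : nat) : word := if k == 0 then [::] else [:: k].
Definition bw (b : nat * nat) : word := hdw b.1 ++ nseq b.2 n.
Definition rebuild (S : st) : word :=
  match S with (B, q) =>
  match B with
  | (k, r) :: rest => flatten (map bw (rev rest)) ++ hdw k ++ nseq (r + n.+1 * q) n
  | [::] => [::] end end.

Lemma rebuild_eq k r rest q : rebuild ((k, r) :: rest, q) =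
  flatten (map bw (rev rest)) ++ hdw k ++ nseq (r + n.+1 * q) n.
Proof. by []. Qed.

Lemma rebuild_addb S : S.1 != [::] -> rebuild (addb S) = rebuild S ++ [:: n].
Proof.
case: S => [[|[k r] rest] q] // _; rewrite /addb; case: eqP => [->|_]; rewrite !rebuild_eq -!catA;
  congr (_ ++ _ ++ _); rewrite -(nseqD _ 1); f_equal; rewrite ?mulnS; lia.
Qed.

Lemma addb_ne S : S.1 != [::] -> (addb S).1 != [::].
Proof. by case: S => [[|[k r] rest] q] // _; rewrite /addb; case: (r == n). Qed.

Lemma rebuild_iter t S : S.1 != [::] -> rebuild (iter t addb S) = rebuild S ++ nseq t n.
Proof.
move=> hS; elim: t => [|t IH]; first by rewrite cats0.
have hne : (iter t addb S).1 != [::] by elim: t {IH} => //= t IH; exact: addb_ne.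
by rewrite iterS rebuild_addb // IH -catA -(nseqD _ 1) addn1.
Qed.

Lemma key K m N : 0 < K <= n -> 0 < m < n ->
  Meq n ([:: K] ++ nseq (K + n.+1 * N) n ++ [:: m])
    (if K + m <= n then [:: K + m] ++ nseq (K + n.+1 * N) n
     else [:: K + m - n] ++ nseq (K.+1 + n.+1 * N) n).
Proof.
move=> hK hm; rewrite (nseqD K) (nseqD K.+1) -!catA.
apply: Meq_trans (Meq_catl _ (Meq_catl _ (Dcomm N hm))) _.
rewrite !catA; have H := Rrel hK hm.
have E : forall x : word, [:: K] ++ nseq K n ++ [:: m] ++ x = ([:: K] ++ nseq K n ++ [:: m]) ++ x.
  by move=> x; rewrite -!catA.
rewrite -!catA E; case: ifP H => _ H; rewrite !catA; exact: Meq_catr.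
Qed.

Lemma F2step S a : Inv S -> 0 < a <= n -> Meq n (rebuild S ++ [:: a]) (rebuild (step S a)).
Proof.
move=> hS ha; rewrite /step; case: eqP => [->|an].
  rewrite rebuild_addb; first exact: Meq_refl.
  by move: hS; case: S => [[|b rest] q].
have hm : 0 < a < n by apply/andP; lia.
rewrite hm.
move: hS; case: S => [[|[k r] rest] q] //; rewrite /Inv /= => hS.
have hk : k < n by case: rest hS => [|b rest] /=; [case/andP => /eqP -> | case/and3P => /andP[]]; lia.
have hr : r <= n by case: rest hS => [|b rest] /=; [case/andP | case/and3P]; lia.
case: ifP => hred.
  move/andP: hred => [/eqP k0 /eqP rk]; subst r.
  have hw : hdw k = [:: k] by rewrite /hdw; case: eqP.
  have K := key q (K := k) ltac:(lia) hm.
  case: ifP => h1.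
    rewrite (_ : k + a <= n) in K; last lia.
    rewrite /= hw /hdw (_ : (k + a == 0) = false); last by apply/eqP; lia.
    rewrite -!catA; apply: Meq_catl; exact: K.
  case: ifP => h2.
    rewrite (_ : k + a <= n = false) in K; last lia.
    rewrite /= hw /hdw (_ : (k + a - n == 0) = false); last by apply/eqP; lia.
    rewrite -!catA; apply: Meq_catl; exact: K.
  rewrite (_ : k + a <= n) in K; last lia.
  move: hS; case: rest => [|[k' r'] rest'] /=; first by case/andP => /eqP.
  move=> _; rewrite -iterS rebuild_iter // rebuild_eq hw -!catA.
  rewrite rev_cons map_rcons flatten_rcons -!catA; apply: Meq_catl.
  rewrite /= ; apply: Meq_catl.
  apply: Meq_trans (Meq_catl _ K) _.
  rewrite (_ : k + a = n); last lia.
  have -> : [:: n] ++ nseq (k + n.+1 * q) n = nseq (k + n.+1 * q).+1 n by [].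
  rewrite -!nseqD; have -> : r' + (k + n.+1 * q).+1 = r' + n.+1 * q + k.+1 by lia.
  rewrite nseqD; exact: Meq_refl.
rewrite rebuild_eq rev_cons map_rcons flatten_rcons /bw /= -!catA.
apply: Meq_catl; apply: Meq_catl; rewrite nseqD -catA; apply: Meq_catl.
have -> : hdw a = [:: a] by rewrite /hdw; case: eqP => //; lia.
rewrite add0n; exact: Dcomm.
Qed.


Lemma F2fold w S : Inv S -> valid n w ->
  Meq n (rebuild S ++ w) (rebuild (foldl step S w)).
Proof.
elim: w S => [|a w IH] S hS /= hv; first by rewrite cats0; exact: Meq_refl.
case/andP: hv => ha hw.
have -> : rebuild S ++ a :: w = (rebuild S ++ [:: a]) ++ w by rewrite -catA.
apply: Meq_trans (Meq_catr _ (F2step hS ha)) _.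
apply: IH => //; exact: Inv_step.
Qed.

Lemma F2 w : valid n w -> Meq n w (rebuild (mdl w)).
Proof.
move=> hw; have := F2fold Inv_init hw.
have -> : rebuild init = [::] by rewrite /init rebuild_eq muln0.
by [].
Qed.

Definition Kf (S : st) := match S with (B, q) => match B with (k, r) :: _ => k | [::] => 0 end end.
Definition Rf (S : st) := match S with (B, q) => match B with (k, r) :: _ => r | [::] => 0 end end.
Definition Qf (S : st) := match S with (B, q) => match B with (k, r) :: _ => r + n.+1 * q | [::] => 0 end end.

Lemma Qf_addb S : S.1 != [::] -> Qf (addb S) = (Qf S).+1.
Proof.
case: S => [[|[k r] rest] q] // _; rewrite /addb; case: eqP => [->|_] /=; rewrite ?mulnS; lia.
Qed.

Lemma Qf_iter t S : S.1 != [::] -> Qf (iter t addb S) = Qf S + t.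
Proof.
move=> hS; elim: t => [|t IH]; first by rewrite addn0.
have hne : (iter t addb S).1 != [::] by elim: t {IH} => //= t IH; exact: addb_ne.
by rewrite iterS Qf_addb // IH addnS.
Qed.

Lemma Fwd S a : Inv S -> 0 < a <= n ->
  (Kf (step S a) != 0 /\ (Kf (step S a) = Rf (step S a) + a \/
                          Kf (step S a) + n.+1 = Rf (step S a) + a))
  \/ n - a + 1 <= Qf (step S a).
Proof.
move=> hS ha; case: (a =P n) => [->|an].
  rewrite /step eqxx; right; rewrite Qf_addb; first lia.
  by move: hS; case: S => [[|b rest] q].
have hm : 0 < a < n by apply/andP; lia.
rewrite /step (_ : (a == n) = false) ?hm; last by apply/eqP.
move: hS; case: S => [[|[k r] rest] q] //; rewrite /Inv /= => hS.
have hk : k < n by case: rest hS => [|b rest] /=; [case/andP => /eqP -> | case/and3P => /andP[]]; lia.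
case: ifP => hred.
  move/andP: hred => [/eqP k0 /eqP rk]; subst r.
  case: ifP => h1; first by left; split => /=; [apply/eqP; lia | left; lia].
  case: ifP => h2; first by left; split => /=; [apply/eqP; lia | right; lia].
  right; move: hS; case: rest => [|[k' r'] rest'] /=; first by case/andP => /eqP.
  move=> _; rewrite -iterS Qf_iter //; lia.
left; split => /=; [apply/eqP; lia | left; lia].
Qed.


Lemma valid_cat u v : valid n (u ++ v) = valid n u && valid n v.
Proof. exact: all_cat. Qed.

Lemma valid_nseq t : valid n (nseq t n).
Proof. by elim: t => //= t ->; rewrite leqnn andbT; lia. Qed.

Lemma valid1 k : 0 < k <= n -> valid n [:: k].
Proof. by move=> h; rewrite /valid /= h. Qed.

Lemma valid_r1n k : valid n (r1n_pow n k).
Proof.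
elim: k => // k IH; rewrite /r1n_pow /= -/(r1n_pow n k) IH leqnn !andbT; lia.
Qed.

Lemma Hlem K s rv qv : 0 < K < n -> 0 < s <= n -> rv <= n ->
  (K = rv + s \/ K + n.+1 = rv + s) ->
  exists z0, valid n z0 /\ Meq n ([:: K] ++ nseq (rv + n.+1 * qv) n) (z0 ++ [:: s]).
Proof.
move=> hK hs hrv hKr.
case: (s =P n) => [es|sn].
  subst s; have erv : rv = K.+1 by lia.
  exists ([:: K] ++ nseq (K + n.+1 * qv) n); split.
    by rewrite valid_cat valid_nseq valid1 //; lia.
  rewrite erv -catA -(nseqD _ 1) addn1 addSn; exact: Meq_refl.
have hs' : 0 < s < n by lia.
have [z1 [hz1 Hz1]] : exists z1, valid n z1 /\ Meq n ([:: K] ++ nseq rv n) (z1 ++ [:: s]).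
  case: hKr => hKr.
    case: (posnP rv) => [r0|r0].
      by exists [::]; split => //; rewrite hKr r0 add0n; exact: Meq_refl.
    exists ([:: rv] ++ nseq rv n); split; first by rewrite valid_cat valid_nseq valid1 //; lia.
    have := Rrel (k := rv) (m := s) ltac:(lia) hs'.
    rewrite (_ : rv + s <= n) -?hKr; last lia.
    by rewrite -catA; exact: Meq_sym.
  exists ([:: rv.-1] ++ nseq rv.-1 n); split; first by rewrite valid_cat valid_nseq valid1 //; lia.
  have := Rrel (k := rv.-1) (m := s) ltac:(lia) hs'.
  rewrite (_ : rv.-1 + s <= n = false); last lia.
  rewrite (_ : rv.-1 + s - n = K); last lia.
  rewrite (_ : rv.-1.+1 = rv); last lia.
  by rewrite -catA; exact: Meq_sym.
exists (z1 ++ nseq (n.+1 * qv) n); split; first by rewrite valid_cat hz1 valid_nseq.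
rewrite nseqD catA; apply: Meq_trans (Meq_catr _ Hz1) _.
rewrite -!catA; apply: Meq_catl; apply: Meq_sym; exact: Dcomm.
Qed.


Lemma main_sec i j : 0 < i -> i < j -> j <= n ->
  is_left_lcm n [:: i] [:: j] (r1n_pow n (n - j + 1) ++ [:: i]) /\
  Meq n (r1n_pow n (n - j + 1) ++ [:: i])
        ([:: n - j + i + 1] ++ r1n_pow n (n - j) ++ [:: j]).
Proof.
move=> hi hij hjn.
set t := n - j + 1; set s := n - j + i + 1.
have hin : 0 < i < n by apply/andP; lia.
have Lrel : Meq n (r1n_pow n t ++ [:: i]) ([:: s] ++ nseq t n).
  apply: Meq_trans (Meq_catr _ (r1n_pow_eq (k := t) ltac:(lia))) _.
  have := Rrel (k := t) (m := i) ltac:(lia) hin.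
  rewrite (_ : t + i <= n) -?catA; last lia.
  by rewrite (_ : t + i = s) //; lia.
have conj2 : Meq n (r1n_pow n t ++ [:: i]) ([:: s] ++ r1n_pow n (n - j) ++ [:: j]).
  apply: Meq_trans Lrel _.
  case: (j =P n) => [ej|jn].
    rewrite /t ej subnn; exact: Meq_refl.
  apply: Meq_catl; apply: Meq_sym.
  apply: Meq_trans (Meq_catr _ (r1n_pow_eq (k := n - j) ltac:(lia))) _.
  have := Rrel (k := n - j) (m := j) ltac:(lia) ltac:(apply/andP; lia).
  rewrite (_ : n - j + j <= n) -?catA; last lia.
  rewrite (_ : n - j + j = n); last lia.
  by rewrite /t addn1.
split; last exact: conj2.
split.
  exists (r1n_pow n t), ([:: s] ++ r1n_pow n (n - j)); split.
  - exact: valid_r1n.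
  - by rewrite valid_cat valid_r1n valid1 //; lia.
  - exact: Meq_refl.
  - by rewrite -catA.
move=> c x y hc hx hy Hx Hy.
have eUx : mdl c = step (mdl x) i by rewrite (mdl_Meq Hx hc) mdl_cat.
have eUy : mdl c = step (mdl y) j.
  by rewrite (mdl_Meq Hy hc) mdl_cat.
have Fi := Fwd (Inv_mdl hx) (a := i) ltac:(lia).
have Fj := Fwd (Inv_mdl hy) (a := j) ltac:(lia).
rewrite -eUx in Fi; rewrite -eUy in Fj.
have Hc := F2 hc.
have hvU : valid n (rebuild (mdl c)) by rewrite -(Meq_valid Hc).
have IU := Inv_mdl hc.
move: Fi Fj Hc hvU IU; case: (mdl c) => [[|[K r] rest] q] //=.
rewrite /Inv /= => Fi Fj Hc hvU IU.
set P := flatten _ in Hc hvU.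
set Q := r + n.+1 * q.
have hQt : t <= Q by case: Fi => [[_ ?]|?]; case: Fj => [[_ ?]|?]; lia.
clear Fj eUx eUy Hx Hy.
have hKr : (K != 0) -> 0 < K < n.
  by case: rest IU {P Hc hvU} => [|b rest] /=; [case/andP => /eqP -> | case/and3P].
have hr : r <= n.
  by case: rest IU {P Hc hvU hKr} => [|b rest] /=; [case/andP | case/and3P].
rewrite !valid_cat in hvU; case/and3P: hvU => hP hK _.
suff [z1 [hz1 Hz1]] : exists z1, valid n z1 /\ Meq n (hdw K ++ nseq (Q - t) n) (z1 ++ [:: s]).
  exists (P ++ z1); split; first by rewrite valid_cat hP.
  apply: Meq_trans Hc _.
  apply: (Meq_trans (v := P ++ (hdw K ++ nseq (Q - t) n) ++ nseq t n)).
    rewrite -catA -nseqD (_ : Q - t + t = Q); first exact: Meq_refl.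
    lia.
  rewrite -!catA; apply: Meq_catl; rewrite catA; apply: Meq_trans (Meq_catr _ Hz1) _.
  rewrite -catA; apply: Meq_catl; exact: Meq_sym Lrel.
case: Fi => [[hK0 hKi] | hbi].
  have hK' := hKr hK0.
  have hw : hdw K = [:: K] by rewrite /hdw (negbTE hK0).
  rewrite hw.
  case: hKi => hKi.
    case: (leqP t r) => htr.
      rewrite (_ : Q - t = (r - t) + n.+1 * q); last by rewrite /Q; lia.
      apply: Hlem => //; lia.
    have hq : 0 < q by move: hQt; rewrite /Q; case: (q) => [|?] //; rewrite muln0; lia.
    rewrite (_ : Q - t = (r + n.+1 - t) + n.+1 * q.-1); last by rewrite /Q -{1}(prednK hq) mulnS; lia.
    apply: Hlem => //; lia.
  rewrite (_ : Q - t = (r - t) + n.+1 * q); last by rewrite /Q; lia.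
  apply: Hlem => //; lia.
case: (s =P n) => [es|sn].
  exists (hdw K ++ nseq (Q - t - 1) n); split; first by rewrite valid_cat hK valid_nseq.
  rewrite es -catA -(nseqD _ 1) (_ : Q - t - 1 + 1 = Q - t); first exact: Meq_refl.
  lia.
exists (hdw K ++ nseq (Q - (n - i + 1)) n ++ [:: n - s] ++ nseq (n - s) n); split.
  by rewrite !valid_cat hK !valid_nseq valid1 //; lia.
rewrite (_ : Q - t = Q - (n - i + 1) + (n - s).+1); last lia.
rewrite nseqD -!catA; apply: Meq_catl; apply: Meq_catl.
have := Rrel (k := n - s) (m := s) ltac:(lia) ltac:(apply/andP; lia).
have -> : n - s + s <= n by lia.
have -> : n - s + s = n by lia.
move=> H; apply: Meq_sym; exact: H.
Qed.


End M.

Theorem corollary4p13 (n i j : nat) :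
  (1 <= n)%N -> (1 <= i)%N -> (i < j)%N -> (j <= n)%N ->
  is_left_lcm n [:: i] [:: j] (r1n_pow n (n - j + 1) ++ [:: i]) /\
  Meq n (r1n_pow n (n - j + 1) ++ [:: i])
        ([:: n - j + i + 1] ++ r1n_pow n (n - j) ++ [:: j]).
Proof.
move=> h1 hi hij hjn.
have n2 : 1 < n by lia.
exact: (main_sec n2 hi hij hjn).
Qed.
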